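(* Let $q>0$ and let $(p_n)_{n\ge1}$ be the $q$-Mallows process. Then for every $n\ge1$, $p_n$ is distributed according to the Mallows measure $\mu_{n,1/q}$.
   Context: For $q>0$ and $n\ge1$, $\mu_{n,q}(\pi)=q^{\mathrm{inv}(\pi)}/Z_{n,q}$ on $S_n$, with $\mathrm{inv}(\pi)$ the number of pairs $i<j$ with $\pi(i)>\pi(j)$ and $Z_{n,q}$ a normalizing constant. The $q$-Mallows process is the sequence of random permutations $p_n\in S_n$ defined as follows: let $(p_n(n))_{n\ge1}$ be independent random variables with $\mathbb{P}(p_n(n)=j)=\frac{q^{j-1}}{1+q+\dots+q^{n-1}}$ for $1\le j\le n$; set $p_1$ to be the unique permutation of $\{1\}$, and for $n\ge2$ define $p_n$ by the given value $p_n(n)$ and, for $1\le i\le n-1$, $p_n(i)=p_{n-1}(i)$ if $p_{n-1}(i)<p_n(n)$ and $p_n(i)=p_{n-1}(i)+1$ if $p_{n-1}(i)\ge p_n(n)$. *)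

(* Defs.v *)
From mathcomp Require Import all_boot all_order all_algebra all_fingroup.
Set Implicit Arguments. Unset Strict Implicit. Unset Printing Implicit Defensive.
Import Order.TTheory GRing.Theory Num.Theory.

Definition inv_count (n : nat) (s : 'S_n) : nat :=
  #|[set ij : 'I_n * 'I_n | (ij.1 < ij.2)%N && (s ij.2 < s ij.1)%N]|.

Local Open Scope ring_scope.

Definition mallows (R : fieldType) (n : nat) (q : R) (s : 'S_n) : R :=
  q ^+ inv_count s / \sum_(t : 'S_n) q ^+ inv_count t.

Local Close Scope ring_scope.

(* The q-Mallows process, in 1-based values, driven by x m = p_m(m).
   mproc x n i = p_n(i) for 1 <= i <= n.  p_1 is the identity of {1};
   for n >= 2, p_n(n) = x n and p_n(i) = p_{n-1}(i) (+1 if p_{n-1}(i) >= x n). *)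
Fixpoint mproc (x : nat -> nat) (n : nat) : nat -> nat :=
  match n with
  | 0 => fun _ => 0
  | S n' =>
    match n' with
    | 0 => fun _ => 1
    | S _ => fun i =>
        if i == n then x n
        else let v := mproc x n' i in if (v < x n)%N then v else v.+1
    end
  end.

(* A realization of (p_1(1), ..., p_n(n)) is encoded (0-based) by
   c : {ffun 'I_n -> 'I_n}, with p_{k+1}(k+1) = c k + 1. *)
Definition choice_seq (n : nat) (c : {ffun 'I_n -> 'I_n}) : nat -> nat :=
  fun m => oapp (fun k : 'I_n => (c k).+1) 0%N (insub m.-1).

Local Open Scope ring_scope.

(* Joint law of independent p_m(m), m = 1..n:
   P(p_m(m) = j) = q^(j-1) / (1 + q + ... + q^(m-1)) for 1 <= j <= m, 0 otherwise. *)
Definition choice_weight (R : fieldType) (n : nat) (q : R)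
    (c : {ffun 'I_n -> 'I_n}) : R :=
  \prod_(k < n)
    (if (c k <= k)%N then q ^+ (c k) / \sum_(i < k.+1) q ^+ i else 0).

(* P(p_n = s), s a permutation of {0..n-1} read 1-based as i+1 |-> s i + 1. *)
Definition qmallows_law (R : fieldType) (n : nat) (q : R) (s : 'S_n) : R :=
  \sum_(c : {ffun 'I_n -> 'I_n}
        | [forall i : 'I_n, mproc (choice_seq c) n i.+1 == (s i).+1])
    choice_weight q c.

(* Main.v *)
Require Import Defs.
From mathcomp Require Import all_boot all_order all_algebra all_fingroup.
From mathcomp Require Import zify.
Import Order.TTheory GRing.Theory Num.Theory.
Set Implicit Arguments. Unset Strict Implicit.

Definition bmp (a v : nat) : nat := if (v < a)%N then v else v.+1.

Definition Lseq (x : nat -> nat) (n : nat) : seq nat := map (mproc x n) (iota 1 n).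

Fixpoint invs (s : seq nat) : nat :=
  match s with [::] => 0%N | v :: t => (count (fun w => w < v) t + invs t)%N end.

Definition validx (x : nat -> nat) (n : nat) := forall m, (2 <= m <= n)%N -> (1 <= x m <= m)%N.

Lemma Lseq1 x : Lseq x 1 = [:: 1%N].
Proof. by []. Qed.

Lemma mprocS x n i : mproc x n.+2 i =
  if i == n.+2 then x n.+2 else bmp (x n.+2) (mproc x n.+1 i).
Proof. by []. Qed.

Lemma LseqS x n : (1 <= n)%N ->
  Lseq x n.+1 = rcons (map (bmp (x n.+1)) (Lseq x n)) (x n.+1).
Proof.
case: n => // n _.
rewrite /Lseq -addn1 iotaD map_cat -cats1 -map_comp; congr (_ ++ _).
  apply/eq_in_map => i; rewrite mem_iota => /andP[_ hi].
  rewrite addn1 mprocS.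
  have -> : (i == n.+2) = false by apply/negbTE; lia.
  by [].
rewrite addn1 add1n; transitivity [:: mproc x n.+2 n.+2]; first by []. by rewrite mprocS eqxx.
Qed.

Lemma size_Lseq x n : size (Lseq x n) = n.
Proof. by rewrite size_map size_iota. Qed.

Lemma bmp_inj a : injective (bmp a).
Proof. move=> u v; rewrite /bmp; case: (ltnP u a); case: (ltnP v a); lia. Qed.

Lemma Lseq_ok x n : (1 <= n)%N -> validx x n ->
  uniq (Lseq x n) && all (fun v => 0 < v <= n)%N (Lseq x n).
Proof.
elim: n => // n IH hn hv.
case: (posnP n) => [->|n0]; first by [].
have hv' : validx x n by move=> m hm; apply: hv; lia.
have /andP[u a] := IH n0 hv'.
have ha := hv n.+1 ltac:(lia).
rewrite LseqS // rcons_uniq (map_inj_uniq (@bmp_inj _)) u andbT all_rcons.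
rewrite ha /=; apply/andP; split.
  by apply/mapP => -[v _]; rewrite /bmp; case: (ltnP v (x n.+1)); lia.
rewrite all_map; apply/allP => v hv2 /=; move/allP: a => /(_ v hv2).
rewrite /bmp; case: (ltnP v (x n.+1)); lia.
Qed.

Lemma Lseq_perm x n : (1 <= n)%N -> validx x n -> perm_eq (Lseq x n) (iota 1 n).
Proof.
move=> hn hv; have /andP[u a] := @Lseq_ok x n hn hv.
have [_ E] := @uniq_min_size _ (Lseq x n) (iota 1 n) u
  ltac:(move=> v hv2; move/allP: a => /(_ v hv2); rewrite mem_iota; lia)
  ltac:(by rewrite size_iota size_Lseq).
by apply: uniq_perm => //; apply: iota_uniq.
Qed.

Lemma count_iota_ge a n : (1 <= a)%N -> count (fun v => a <= v)%N (iota 1 n) = (n.+1 - a)%N.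
Proof.
move=> ha; elim: n => [|n IH]; first by rewrite /=; lia.
rewrite -[n.+1]addn1 iotaD count_cat IH /= addn0.
case: (leqP a (1 + n)); lia.
Qed.

Lemma invs_rcons s a : invs (rcons s a) = (invs s + count (fun w => a < w) s)%N.
Proof.
elim: s => //= v s IH.
rewrite IH -cats1 count_cat /=; case: (ltnP a v); lia.
Qed.

Lemma invs_bmp a s : invs (map (bmp a) s) = invs s.
Proof.
elim: s => //= v s ->; congr (_ + _)%N; rewrite count_map; apply: eq_count => w /=.
rewrite /bmp; case: (ltnP w a); case: (ltnP v a); lia.
Qed.

Lemma Lseq_inv x n : (1 <= n)%N -> validx x n ->
  invs (Lseq x n) = (\sum_(1 <= m < n) (m.+1 - x m.+1))%N.
Proof.
elim: n => // n IH hn hv.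
case: (posnP n) => [->|n0]; first by rewrite big_geq.
have hv' : validx x n by move=> m hm; apply: hv; lia.
have ha := hv n.+1 ltac:(lia).
rewrite LseqS // invs_rcons invs_bmp IH // big_nat_recr //=; congr (_ + _)%N.
rewrite count_map.
rewrite (@eq_count _ _ (fun v => x n.+1 <= v)%N); last first.
  move=> w /=; rewrite /bmp; case: (ltnP w (x n.+1)); lia.
rewrite (seq.permP (@Lseq_perm x n n0 hv')) count_iota_ge; lia.
Qed.

Lemma Lseq_det x y n : (1 <= n)%N -> Lseq x n = Lseq y n ->
  forall m, (2 <= m <= n)%N -> x m = y m.
Proof.
elim: n => // n IH hn E m hm.
case: (posnP n) => [n0|n0]; first lia.
rewrite !LseqS // in E.
have Ea : x n.+1 = y n.+1 by have := congr1 (last 0%N) E; rewrite !last_rcons.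
move: E; rewrite Ea => /rcons_inj [] /(inj_map (@bmp_inj _)) E.
case: (m =P n.+1) => [->//|ne]; apply: IH => //; lia.
Qed.
Lemma count_nth (P : pred nat) t :
  count P t = (\sum_(0 <= j < size t) P (nth 0 t j))%N.
Proof.
elim: t => [|v t IH]; first by rewrite big_geq.
by rewrite /= big_nat_recl //= IH.
Qed.

Lemma invs_sum L : invs L =
  (\sum_(0 <= i < size L) \sum_(0 <= j < size L)
     ((i < j) && (nth 0 L j < nth 0 L i)))%N.
Proof.
elim: L => [|v t IH]; first by rewrite big_geq.
rewrite /= big_nat_recl //= big_nat_recl //= add0n count_nth IH; congr (_ + _)%N.
apply: eq_bigr => i _; rewrite big_nat_recl //=.
Qed.

Lemma inv_count_invs n (s : 'S_n) L : size L = n ->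
  (forall i : 'I_n, nth 0 L i = (s i).+1) -> inv_count s = invs L.
Proof.
move=> hs hL; rewrite invs_sum /inv_count -sum1_card big_mkcond /=.
set S := [set _ | _].
rewrite (eq_bigr (fun p => (fun i j => if (i, j) \in S then 1 else 0) p.1 p.2)%N); last by case.
rewrite -(pair_bigA _ (fun i j => if (i, j) \in S then 1 else 0)%N) hs.
rewrite big_mkord; apply: eq_bigr => i _; rewrite big_mkord; apply: eq_bigr => j _.
by rewrite inE /= !hL ltnS.
Qed.

Section FF.
Variable n : nat.
Implicit Types c : {ffun 'I_n -> 'I_n}.

Definition validc c := [forall k : 'I_n, (c k <= k)%N].

Lemma xcE c (k : 'I_n) : choice_seq c k.+1 = (c k).+1.
Proof. by rewrite /choice_seq /= valK. Qed.

Lemma validc_x c : validc c -> validx (choice_seq c) n.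
Proof.
move=> /forallP hv m hm; have hk : (m.-1 < n)%N by lia.
have := xcE c (Ordinal hk); rewrite /= prednK; last by lia.
move=> ->; have := hv (Ordinal hk); rewrite /=; lia.
Qed.

Lemma inv_c c : (0 < n)%N -> validc c ->
  invs (Lseq (choice_seq c) n) = (\sum_(k < n) (k - c k))%N.
Proof.
move=> hn hv; rewrite Lseq_inv //; last exact: validc_x.
have -> : (\sum_(1 <= m < n) (m.+1 - choice_seq c m.+1) =
          \sum_(0 <= m < n) (m.+1 - choice_seq c m.+1))%N.
  rewrite [in RHS]big_ltn /=; last exact: hn.
  have := xcE c (Ordinal hn); rewrite /= => ->; lia.
rewrite big_mkord; apply: eq_bigr => k _; rewrite xcE; lia.
Qed.

Lemma det_c c c' : (0 < n)%N -> validc c -> validc c' ->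
  Lseq (choice_seq c) n = Lseq (choice_seq c') n -> c = c'.
Proof.
move=> hn hv hv' E; apply/ffunP => k; apply: ord_inj.
move/forallP: hv => /(_ k) hk; move/forallP: hv' => /(_ k) hk'.
case: (posnP k) => [k0|k0].
  by move: hk hk'; rewrite k0 !leqn0 => /eqP -> /eqP ->.
have := @Lseq_det _ _ _ hn E k.+1 ltac:(have := ltn_ord k; lia).
by rewrite !xcE => -[].
Qed.

Definition cond c (s : 'S_n) :=
  [forall i : 'I_n, mproc (choice_seq c) n i.+1 == (s i).+1].

Lemma nth_Lseq x (i : 'I_n) : nth 0 (Lseq x n) i = mproc x n i.+1.
Proof. by rewrite /Lseq (nth_map 0) ?size_iota // nth_iota. Qed.

Lemma cond_nth c s : cond c s -> forall i : 'I_n, nth 0 (Lseq (choice_seq c) n) i = (s i).+1.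
Proof. by move=> /forallP h i; rewrite nth_Lseq; apply/eqP. Qed.

Lemma cond_Lseq c c' s : cond c s -> cond c' s ->
  Lseq (choice_seq c) n = Lseq (choice_seq c') n.
Proof.
move=> h h'; apply: (eq_from_nth (x0 := 0%N)); first by rewrite !size_Lseq.
move=> i; rewrite size_Lseq => hi.
by rewrite (@cond_nth _ _ h (Ordinal hi)) (@cond_nth _ _ h' (Ordinal hi)).
Qed.

Lemma cond_uniq c s t : cond c s -> cond c t -> s = t.
Proof.
move=> /cond_nth h /cond_nth h'; apply/permP => i.
by apply/val_inj; have := h i; rewrite h' => -[].
Qed.

End FF.

Section PP.
Variable n : nat.
Implicit Types c : {ffun 'I_n.+1 -> 'I_n.+1}.

Lemma Lc_bound c (i : 'I_n.+1) : validc c ->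
  (0 < nth 0 (Lseq (choice_seq c) n.+1) i <= n.+1)%N.
Proof.
move=> hv; have /andP[_ /allP a] := Lseq_ok (ltn0Sn n) (validc_x hv).
by apply: a; apply: mem_nth; rewrite size_Lseq.
Qed.

Definition fc c (i : 'I_n.+1) : 'I_n.+1 :=
  if validc c then inord (nth 0 (Lseq (choice_seq c) n.+1) i).-1 else i.

Lemma fc_inj c : injective (fc c).
Proof.
move=> i j; rewrite /fc; case: ifP => hv //.
have /andP[u _] := Lseq_ok (ltn0Sn n) (validc_x hv).
have bi := Lc_bound i hv; have bj := Lc_bound j hv.
move/(congr1 (@nat_of_ord n.+1)); rewrite !inordK; try lia.
move=> E; apply: ord_inj; apply/eqP.
rewrite -(nth_uniq 0%N _ _ u) ?size_Lseq //; apply/eqP.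
move: bi bj E; move: (nth 0 (Lseq (choice_seq c) n.+1) i) (nth 0 (Lseq (choice_seq c) n.+1) j) => a b; lia.
Qed.

Definition Phi c : 'S_n.+1 := perm (@fc_inj c).

Lemma cond_Phi c : validc c -> cond c (Phi c).
Proof.
move=> hv; apply/forallP => i; rewrite permE /fc hv inordK; last first.
  have := Lc_bound i hv; lia.
rewrite -nth_Lseq; have := Lc_bound i hv; case: (nth _ _ _) => //.
Qed.

Lemma sum_le (k : 'I_n.+1) : (\sum_(j < n.+1) (j <= k))%N = k.+1.
Proof.
rewrite (eq_bigr (fun j : 'I_n.+1 => if (j < k.+1)%N then 1%N else 0%N)); last first.
  by move=> j _; rewrite ltnS; case: (_ <= _)%N.
rewrite -big_mkcond -(@big_ord_widen nat 0%N addn k.+1 n.+1 (fun _ => 1%N) (ltn_ord k)).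
by rewrite sum1_card card_ord.
Qed.

Lemma card_valid : #|[set c : {ffun 'I_n.+1 -> 'I_n.+1} | validc c]| = n.+1`!.
Proof.
rewrite -sum1_card big_mkcond /=.
rewrite (eq_bigr (fun c : {ffun 'I_n.+1 -> 'I_n.+1} =>
           \prod_(k < n.+1) (c k <= k : nat))%N); last first.
  move=> c _; rewrite inE; case: ifP => [/forallP h|/negbT].
    by rewrite big1 // => k _; rewrite h.
  rewrite negb_forall => /existsP [k hk]; rewrite (bigD1 k) //= (negbTE hk).
  by rewrite mul0n.
rewrite -(bigA_distr_bigA (fun (k j : 'I_n.+1) => (j <= k : nat))%N).
rewrite (eq_bigr (fun k : 'I_n.+1 => k.+1)); last by move=> k _; rewrite sum_le.
elim: n.+1 => [|m IH]; first by rewrite big_ord0.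
by rewrite big_ord_recr /= IH factS mulnC.
Qed.

Lemma Phi_onto : [set Phi c | c in [set c : {ffun 'I_n.+1 -> 'I_n.+1} | validc c]] = [set: 'S_n.+1].
Proof.
apply/eqP; rewrite eqEcard subsetT cardsT card_Sn card_in_imset; first by rewrite card_valid leqnn.
move=> c c'; rewrite !inE => hv hv' E.
apply: (det_c (ltn0Sn n) hv hv'); apply: (cond_Lseq (s := Phi c)).
  exact: cond_Phi.
by rewrite E; apply: cond_Phi.
Qed.

End PP.

Local Open Scope ring_scope.

Section RR.
Variable R : realFieldType.
Variable q : R.
Hypothesis hq : 0 < q.
Variable n : nat.
Implicit Types c : {ffun 'I_n.+1 -> 'I_n.+1}.

Definition G (k : nat) : R := \sum_(i < k.+1) q ^+ i.
Definition D : R := \prod_(k < n.+1) G k.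
Definition T : nat := (\sum_(k < n.+1) k)%N.

Lemma G_pos k : 0 < G k.
Proof.
apply: (lt_le_trans ltr01); rewrite /G big_ord_recl expr0 lerDl.
by apply: sumr_ge0 => i _; apply: exprn_ge0; apply: ltW.
Qed.

Lemma D_neq0 : D != 0.
Proof. by rewrite /D prodf_seq_neq0; apply/allP => k _; rewrite (gt_eqF (G_pos k)). Qed.

Lemma weight_valid c : validc c ->
  choice_weight q c = q ^+ (\sum_(k < n.+1) c k)%N / D.
Proof.
move=> /forallP h; rewrite /choice_weight.
rewrite (eq_bigr (fun k : 'I_n.+1 => q ^+ c k / G k)); last by move=> k _; rewrite h.
by rewrite prodf_div prodrXr.
Qed.

Lemma weight_invalid c : ~~ validc c -> choice_weight q c = 0.
Proof.
rewrite negb_forall => /existsP [k hk]; rewrite /choice_weight (bigD1 k) //=.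
by rewrite (negbTE hk) mul0r.
Qed.

Lemma sum_weight : \sum_(c : {ffun 'I_n.+1 -> 'I_n.+1}) choice_weight q c = 1.
Proof.
rewrite /choice_weight.
rewrite -(bigA_distr_bigA (fun k j : 'I_n.+1 =>
            if (j <= k)%N then q ^+ j / \sum_(i < k.+1) q ^+ i else 0)).
apply: big1 => k _.
rewrite (eq_bigr (fun j : 'I_n.+1 => if (j < k.+1)%N then q ^+ j / G k else 0)); last first.
  by move=> j _; rewrite ltnS.
rewrite -big_mkcond -(@big_ord_widen R 0 +%R k.+1 n.+1 (fun j => q ^+ j / G k) (ltn_ord k)).
by rewrite -mulr_suml mulfV // gt_eqF // G_pos.
Qed.

Lemma law_formula (s : 'S_n.+1) :
  qmallows_law q s = q ^+ (T - inv_count s) / D /\ (inv_count s <= T)%N.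
Proof.
have : s \in [set Phi c | c in [set c : {ffun 'I_n.+1 -> 'I_n.+1} | validc c]].
  by rewrite Phi_onto inE.
case/imsetP => c0; rewrite inE => hv0 ->.
have hc0 := cond_Phi hv0.
have Einv : inv_count (Phi c0) = (\sum_(k < n.+1) (k - c0 k))%N.
  rewrite (@inv_count_invs _ _ (Lseq (choice_seq c0) n.+1)) ?size_Lseq //.
    exact: inv_c.
  exact: cond_nth.
have Esum : ((\sum_(k < n.+1) c0 k) + \sum_(k < n.+1) (k - c0 k) = T)%N.
  rewrite -big_split /T; apply: eq_bigr => k _; move/forallP: hv0 => /(_ k).
  by move=> h; rewrite /= subnKC.
split; last by rewrite Einv -Esum leq_addl.
rewrite /qmallows_law (bigD1 c0) //= big1 ?addr0.
  by rewrite weight_valid // Einv -Esum addnK.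
move=> c /andP[hc ne]; case: (boolP (validc c)) => hv; last exact: weight_invalid.
by move: ne; rewrite (det_c (ltn0Sn n) hv hv0 (cond_Lseq hc hc0)) eqxx.
Qed.

Lemma sum_law : \sum_(t : 'S_n.+1) qmallows_law q t = 1.
Proof.
rewrite /qmallows_law.
rewrite (eq_bigr (fun t => \sum_(c : {ffun 'I_n.+1 -> 'I_n.+1}) (if cond c t then choice_weight q c else 0))); last first.
  by move=> t _; rewrite big_mkcond.
rewrite exchange_big /= -sum_weight; apply: eq_bigr => c _.
case: (boolP (validc c)) => hv.
  rewrite (bigD1 (Phi c)) //= cond_Phi // big1 ?addr0 // => t ne.
  by case: ifP => // h; move: ne; rewrite (cond_uniq h (cond_Phi hv)) eqxx.
by rewrite weight_invalid // big1 // => t _; case: ifP.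
Qed.

End RR.

Theorem lemma2p1 (R : realFieldType) (q : R) (hq : 0 < q) (n : nat)
    (hn : (1 <= n)%N) (s : 'S_n) :
  qmallows_law q s = mallows q^-1 s.
Proof.
case: n hn s => [//|n] _ s.
have qn0 : q != 0 by rewrite gt_eqF.
set K := q ^+ T n / D q n.
have Hl : forall t : 'S_n.+1, qmallows_law q t = K * q^-1 ^+ inv_count t.
  move=> t; have [-> hle] := @law_formula R q n t.
  rewrite /K exprVn mulrAC; congr (_ / _).
  apply: (mulIf (expf_neq0 (inv_count t) qn0)).
  by rewrite mulrVK ?unitfE ?expf_neq0 // -exprD subnK.
have HS : K * \sum_(t : 'S_n.+1) q^-1 ^+ inv_count t = 1.
  by rewrite mulr_sumr -(@sum_law R q hq n); apply: eq_bigr => t _; rewrite Hl.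
by rewrite /mallows Hl (mulr1_eq (etrans (mulrC _ _) HS)) mulrC.
Qed.
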